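(* Let $m\ge 2$ be an integer and let $T^{(1)}\neq T^{(2)}$ be two fixed binary strings of length $m$, each satisfying the non-self-overlap condition $T^{(s)}_{[1+k,m]}\neq T^{(s)}_{[1,m-k]}$ for all $k=1,\dots,m-1$. For an integer $M\ge m$, let $B$ be a random string uniformly distributed on $\{0,1\}^M$, and for $s=1,2$ let $$c^{(s)}=\#\left\{k\in\{1,\dots,M-m+1\}\ :\ B_{[k,k+m-1]}=T^{(s)}\right\}.$$ Put $\mu=\frac{M-m+1}{2^m}$ and $\sigma^2=M\left(\frac{1}{2^m}-\frac{2m-1}{2^{2m}}\right)$. For $k\in\{-(m-1),\dots,-1\}\cup\{1,\dots,m-1\}$ define $e_k=1$ if either $1\le k\le m-1$ and $T^{(1)}_{[1,m-k]}=T^{(2)}_{[1+k,m]}$, or $-m+1\le k\le -1$ and $T^{(1)}_{[1-k,m]}=T^{(2)}_{[1,m+k]}$; and $e_k=0$ otherwise. Then, with $m$, $T^{(1)}$, $T^{(2)}$ fixed, as $M\to\infty$, $$\mathbb{E}\left[\frac{c^{(1)}-\mu}{\sigma}\cdot\frac{c^{(2)}-\mu}{\sigma}\right]=\frac{-2m+1+\sum_{k=1}^{m-1}2^{m-k}\,(e_k+e_{-k})}{2^m-2m+1}+O\!\left(\frac{1}{M}\right).$$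
   Context: For a binary string $X$, $X_{[s,t]}$ denotes the substring of length $t-s+1$ consisting of the $s$-th through $t$-th bits of $X$. The quantity $c^{(s)}$ is the count of occurrences of the template $T^{(s)}$ in one block used in the NIST Non-overlapping Template Matching Test. *)

(* Defs.v *)
From HB Require Import structures.
From mathcomp Require Import all_boot all_order all_algebra.
Set Implicit Arguments. Unset Strict Implicit. Unset Printing Implicit Defensive.
Import Order.TTheory GRing.Theory Num.Theory.

(* Binary strings are bitseq; positions are 1-based as in the paper. *)
(* substr X s t = X_[s,t] : the bits s..t of X (length t - s + 1). *)
Definition substr (X : bitseq) (s t : nat) : bitseq :=
  take (t.+1 - s) (drop s.-1 X).

Definition non_self_overlapping (m : nat) (T : bitseq) : Prop :=
  forall k, 1 <= k <= m.-1 -> substr T k.+1 m != substr T 1 (m - k).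

Definition occ (M m : nat) (T : bitseq) (B : M.-tuple bool) : nat :=
  count (fun k => substr B k (k + m - 1) == T) (iota 1 (M - m + 1)).

Definition unifE (R : numFieldType) (M : nat) (f : M.-tuple bool -> R) : R :=
  (\sum_(B : M.-tuple bool) f B) / (2 ^+ M).

Definition muNTM (R : numFieldType) (M m : nat) : R :=
  (M - m + 1)%:R / 2 ^+ m.

Definition sigma2NTM (R : numFieldType) (M m : nat) : R :=
  M%:R * (1 / 2 ^+ m - (2 * m - 1)%:R / 2 ^+ (2 * m)).

Definition ecoef (m : nat) (T1 T2 : bitseq) (k : int) : nat :=
  match k with
  | Posz n => ((1 <= n <= m.-1) && (substr T1 1 (m - n) == substr T2 n.+1 m) : nat)
  | Negz n => (* k = -(n+1) *)
      ((n.+1 <= m.-1) && (substr T1 n.+2 m == substr T2 1 (m - n.+1)) : nat)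
  end.

(* Main.v *)
Require Import Defs.
From HB Require Import structures.
From mathcomp Require Import all_boot all_order all_algebra.
From mathcomp Require Import zify ring lra.
Import Order.TTheory GRing.Theory Num.Theory.
Local Open Scope ring_scope.

Definition Wn (m : nat) (T : bitseq) (j : nat) (B : bitseq) := take m (drop j B) == T.
Definition inw (m j i : nat) := (j <= i < j + m)%N.

Lemma W_all m T j (B : bitseq) : size T = m -> (j + m <= size B)%N ->
  Wn m T j B = all (fun i => inw m j i ==> (nth false B i == nth false T (i - j))) (iota 0 (size B)).
Proof.
move=> hT hB; apply/eqP/allP.
- move=> <- i; rewrite mem_iota => /andP[_ hi]; apply/implyP => /andP[h1 h2].
  rewrite nth_take; last lia. by rewrite nth_drop subnKC.
- move=> H; apply: (@eq_from_nth _ false).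
    by rewrite size_takel ?size_drop; lia.
  move=> t; rewrite size_takel ?size_drop; last lia. move=> ht.
  rewrite nth_take // nth_drop.
  have := H (j + t); rewrite mem_iota /inw.
  have -> : (0 <= j + t < 0 + size B)%N by lia.
  move=> /(_ isT) /implyP; rewrite addKn => h; apply/eqP/h; lia.
Qed.
Lemma count_natr (R : pzSemiRingType) (T : Type) (p : pred T) (s : seq T) :
  (count p s)%:R = \sum_(x <- s) (p x)%:R :> R.
Proof. elim: s => [|x s IH]; first by rewrite big_nil. by rewrite big_cons /= natrD IH. Qed.

Lemma prod_if_count (R : pzSemiRingType) (T : Type) (Q : pred T) (s : seq T) (x : R) :
  \prod_(i <- s) (if Q i then x else 1) = x ^+ count Q s.
Proof.
elim: s => [|y s IH]; first by rewrite big_nil expr0.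
by rewrite big_cons IH /=; case: (Q y); rewrite ?mul1r ?add0n // exprS.
Qed.

Lemma prod_bool (R : pzSemiRingType) (T : Type) (Q : pred T) (s : seq T) :
  \prod_(i <- s) (Q i)%:R = (all Q s)%:R :> R.
Proof.
elim: s => [|y s IH]; first by rewrite big_nil.
by rewrite big_cons IH /=; case: (Q y); rewrite ?mul1r ?mul0r.
Qed.

Lemma count_int a b M : count (fun i => (a <= i < b)%N) (iota 0 M) = (minn b M - a)%N.
Proof.
elim: M => [|M IH]; first by rewrite /= minn0.
rewrite -addn1 iotaD count_cat IH /= add0n.
case: (leqP a M) => h1; case: (ltnP M b) => h2 /=; lia.
Qed.

Lemma sum_tuple_prod (R : comPzSemiRingType) (M : nat) (F : nat -> bool -> R) :
  \sum_(B : M.-tuple bool) \prod_(0 <= i < M) F i (nth false B i)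
  = \prod_(0 <= i < M) \sum_(b : bool) F i b.
Proof.
rewrite big_mkord bigA_distr_bigA.
rewrite (reindex (fun B : M.-tuple bool => [ffun i : 'I_M => tnth B i])) /=.
  apply: eq_bigr => B _; rewrite big_mkord; apply: eq_bigr => i _.
  by rewrite ffunE (tnth_nth false).
exists (fun f : {ffun 'I_M -> bool} => [tuple f i | i < M]) => x _.
  by apply: eq_from_tnth => i; rewrite tnth_mktuple ffunE.
by apply/ffunP => i; rewrite ffunE tnth_mktuple.
Qed.

Lemma count_pair (R : numDomainType) M m T1 T2 j k :
  size T1 = m -> size T2 = m -> (j + m <= M)%N -> (k + m <= M)%N ->
  \sum_(B : M.-tuple bool) (Wn m T1 j B && Wn m T2 k B)%:R =
  (all (fun i => inw m j i && inw m k i ==> (nth false T1 (i-j) == nth false T2 (i-k))) (iota 0 M))%:R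
  * 2 ^+ (M - (m + m - (minn j k + m - maxn j k))) :> R.
Proof.
move=> h1 h2 hj hk.
pose phi i b := (inw m j i ==> (b == nth false T1 (i - j))) && (inw m k i ==> (b == nth false T2 (i - k))).
transitivity (\sum_(B : M.-tuple bool) \prod_(0 <= i < M) ((phi i (nth false B i))%:R : R)).
  apply: eq_bigr => B _; rewrite !W_all ?size_tuple // -all_predI prod_bool /index_iota subn0.
  by congr (_%:R); apply: eq_all => i.
rewrite (@sum_tuple_prod R M (fun i b => ((phi i b)%:R : R))).
rewrite (eq_bigr (fun i => ((inw m j i && inw m k i ==> (nth false T1 (i-j) == nth false T2 (i-k))))%:R * (if ~~(inw m j i || inw m k i) then 2 else 1))); last first.
  move=> i _; rewrite big_bool /phi.
  case: (inw m j i); case: (inw m k i); case: (nth false T1 (i - j)); case: (nth false T2 (i - k)) => /=; rewrite ?mul1r ?mulr1 ?addr0 ?add0r //.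
rewrite big_split /= prod_bool prod_if_count /index_iota subn0.
congr (_ * 2 ^+ _).
have e1 := count_predUI (inw m j) (inw m k) (iota 0 M).
have e2 := count_predC (predU (inw m j) (inw m k)) (iota 0 M).
have c1 : count (inw m j) (iota 0 M) = m by rewrite /inw count_int; lia.
have c2 : count (inw m k) (iota 0 M) = m by rewrite /inw count_int; lia.
have c3 : count (predI (inw m j) (inw m k)) (iota 0 M) = (minn j k + m - maxn j k)%N.
  rewrite (eq_count (a2 := fun i => (maxn j k <= i < minn j k + m)%N)) ?count_int; first lia.
  move=> i /=; rewrite /inw geq_max addn_minl leq_min.
  by case: (j <= i)%N; case: (k <= i)%N; case: (i < j+m)%N; case: (i < k+m)%N.
rewrite size_iota in e2.
have -> : count (fun i => ~~ (inw m j i || inw m k i)) (iota 0 M) = count (predC (predU (inw m j) (inw m k))) (iota 0 M) by [].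
lia.
Qed.

Lemma cons_shift (X Y : bitseq) m M j d : size X = m -> size Y = m -> (j + d + m <= M)%N -> (d <= m)%N ->
  all (fun i => inw m j i && inw m (j + d) i ==> (nth false X (i - j) == nth false Y (i - (j + d)))) (iota 0 M)
  = (take (m - d) (drop d X) == take (m - d) Y).
Proof.
move=> hX hY hM hd; apply/allP/eqP.
- move=> H; apply: (@eq_from_nth _ false).
    by rewrite !size_takel ?size_drop; lia.
  move=> t; rewrite size_takel ?size_drop; last lia. move=> ht.
  rewrite !nth_take // nth_drop.
  have := H (j + d + t); rewrite mem_iota /inw.
  have -> : (0 <= j + d + t < 0 + M)%N by lia.
  have -> : (j <= j + d + t < j + m)%N by lia.
  have -> : (j + d <= j + d + t < j + d + m)%N by lia.
  move=> /(_ isT) /= /eqP.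
  have -> : (j + d + t - j = d + t)%N by lia.
  by have -> : (j + d + t - (j + d) = t)%N by lia.
- move=> E i _; apply/implyP; rewrite /inw => /andP[/andP[h1 h2] /andP[h3 h4]].
  apply/eqP.
  have ht : (i - (j + d) < m - d)%N by lia.
  have := congr1 (nth false ^~ (i - (j + d))%N) E.
  rewrite !nth_take // nth_drop => <-.
  congr nth; lia.
Qed.

Lemma cons_far (X Y : bitseq) m M j k : (j + m <= k)%N || (k + m <= j)%N ->
  all (fun i => inw m j i && inw m k i ==> (nth false X (i - j) == nth false Y (i - k))) (iota 0 M).
Proof.
move=> h; apply/allP => i _; apply/implyP; rewrite /inw => /andP[/andP[h1 h2] /andP[h3 h4]].
exfalso; case/orP: h; lia.
Qed.

Lemma collapse (R : pzSemiRingType) (f : nat -> R) (m j k : nat) :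
  \sum_(1 <= d < m) (k == (j + d)%N)%:R * f d =
  if (1 <= k - j < m)%N && (j < k)%N then f (k - j)%N else 0.
Proof.
rewrite -(@big_nat1_cond_eq R 0 +%R f (fun _ => (j < k)%N)) big_mkcond /= [RHS]big_mkcond /=.
apply: eq_big_nat => d /andP[hd _].
have -> : (k == (j + d)%N) = (j < k)%N && (d == (k - j)%N).
  case: (ltnP j k) => h /=.
    by apply/eqP/eqP; lia.
  by apply/negbTE/eqP; lia.
by case: ifP => _; rewrite ?mul1r ?mul0r.
Qed.

Definition epos m (T1 T2 : bitseq) d : bool := take (m - d) T1 == take (m - d) (drop d T2).
Definition eneg m (T1 T2 : bitseq) d : bool := take (m - d) (drop d T1) == take (m - d) T2.
Definition uu (R : numFieldType) m T1 T2 d : R := ((eneg m T1 T2 d)%:R * 2 ^+ (m - d) - 1) / (2 ^+ m) ^+ 2.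
Definition vv (R : numFieldType) m T1 T2 d : R := ((epos m T1 T2 d)%:R * 2 ^+ (m - d) - 1) / (2 ^+ m) ^+ 2.
Definition a0 (R : numFieldType) m : R := - 1 / (2 ^+ m) ^+ 2.
Definition hh (R : numFieldType) m T1 T2 (j k : nat) : R :=
  (j == k)%:R * a0 R m + \sum_(1 <= d < m) ((k == (j + d)%N)%:R * uu R m T1 T2 d + (j == (k + d)%N)%:R * vv R m T1 T2 d).

Lemma two_neq0 (R : numFieldType) n : (2 : R) ^+ n != 0.
Proof. by rewrite expf_neq0 // pnatr_eq0. Qed.

Lemma Sjk (R : numFieldType) M m T1 T2 j k : size T1 = m -> size T2 = m -> T1 != T2 ->
  (j + m <= M)%N -> (k + m <= M)%N ->
  \sum_(B : M.-tuple bool) (Wn m T1 j B && Wn m T2 k B)%:R = 2 ^+ M * (1 / (2 ^+ m) ^+ 2 + hh R m T1 T2 j k) :> R.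
Proof.
move=> h1 h2 hne hj hk; rewrite count_pair // /hh big_split /= !collapse.
have PE : forall d, (d <= m)%N -> (2 ^+ m) ^+ 2 = 2 ^+ (m + d) * 2 ^+ (m - d) :> R.
  by move=> d hd; rewrite -exprM -exprD; congr (_ ^+ _); lia.
have ME : forall x, (x <= M)%N -> 2 ^+ M = 2 ^+ (M - x) * 2 ^+ x :> R.
  by move=> x hx; rewrite -exprD; congr (_ ^+ _); lia.
have Z := two_neq0 R.
case: (ltngtP j k) => hjk.
- have [d ek] : exists d, k = (j + d)%N by exists (k - j)%N; lia.
  subst k; rewrite andbT andbF addKn mulr0n mul0r add0r addr0.
  case: (ltnP d m) => hd.
  + rewrite ifT; last by lia.
    rewrite cons_shift //; last by lia.
    rewrite (_ : (M - (m + m - (j + m - (j + d))) = M - (m + d))%N); last by lia.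
    rewrite (ME (m + d)%N); last by lia.
    have hd' : (d <= m)%N by lia.
    rewrite /uu /eneg !(PE d hd').
    by field; rewrite ?Z.
  + rewrite ifF; last by lia.
    rewrite cons_far; last by lia.
    rewrite (_ : (M - (m + m - (j + m - (j + d))) = M - (m + m))%N); last by lia.
    rewrite (ME (m + m)%N); last by lia.
    rewrite -exprM mulnC mul2n -addnn.
    by rewrite mulr1n addr0 -mulrA div1r mulfV ?Z // mulr1 mul1r.
- have [d ej] : exists d, j = (k + d)%N by exists (j - k)%N; lia.
  subst j; rewrite andbT andbF addKn mulr0n mul0r add0r add0r.
  case: (ltnP d m) => hd.
  + rewrite ifT; last by lia.
    have -> : all (fun i => inw m (k + d) i && inw m k i ==> (nth false T1 (i - (k + d)) == nth false T2 (i - k))) (iota 0 M)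
       = all (fun i => inw m k i && inw m (k + d) i ==> (nth false T2 (i - k) == nth false T1 (i - (k + d)))) (iota 0 M).
      by apply: eq_all => i; rewrite andbC eq_sym.
    rewrite cons_shift //; last by lia.
    rewrite (_ : (M - (m + m - (k + m - (k + d))) = M - (m + d))%N); last by lia.
    rewrite (ME (m + d)%N); last by lia.
    have hd' : (d <= m)%N by lia.
    rewrite /vv /epos eq_sym !(PE d hd').
    by field; rewrite ?Z.
  + rewrite ifF; last by lia.
    rewrite cons_far; last by lia.
    rewrite (_ : (M - (m + m - (k + m - (k + d))) = M - (m + m))%N); last by lia.
    rewrite (ME (m + m)%N); last by lia.
    rewrite -exprM mulnC mul2n -addnn.
    by rewrite mulr1n addr0 -mulrA div1r mulfV ?Z // mulr1 mul1r.
- subst k; rewrite !andbF mulr1n.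
  have := @cons_shift T1 T2 m M j 0 h1 h2 ltac:(lia) ltac:(lia); rewrite !addn0 subn0 drop0 !take_oversize ?h1 ?h2 // => ->.
  rewrite (negbTE hne) mul0r /a0.
  by rewrite addr0; field; rewrite ?Z.
Qed.

Lemma sum_eq_shift (R : pzSemiRingType) N d : (d <= N)%N ->
  \sum_(j <- iota 0 N) \sum_(k <- iota 0 N) (k == (j + d)%N)%:R = (N - d)%:R :> R.
Proof.
move=> hd.
rewrite (eq_bigr (fun j => ((j + d < N)%N : nat)%:R)); last first.
  move=> j _; rewrite -count_natr; congr (_%:R).
  by rewrite (count_uniq_mem _ (iota_uniq 0 N)) mem_iota add0n.
rewrite -count_natr; congr (_%:R).
rewrite (eq_count (a2 := fun j => (0 <= j < N - d)%N)) ?count_int; first lia.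
move=> j /=; lia.
Qed.

Lemma sum_eq_shift2 (R : pzSemiRingType) N d : (d <= N)%N ->
  \sum_(j <- iota 0 N) \sum_(k <- iota 0 N) (j == (k + d)%N)%:R = (N - d)%:R :> R.
Proof. by move=> hd; rewrite exchange_big; exact: sum_eq_shift. Qed.

Lemma H_sum (R : numFieldType) m T1 T2 N : (m <= N)%N ->
  \sum_(j <- iota 0 N) \sum_(k <- iota 0 N) hh R m T1 T2 j k
  = N%:R * a0 R m + \sum_(1 <= d < m) (N - d)%:R * (uu R m T1 T2 d + vv R m T1 T2 d).
Proof.
move=> hN; rewrite /hh.
under eq_bigr => j _ do rewrite big_split /=.
rewrite big_split /=; congr (_ + _).
  under eq_bigr => j _ do rewrite -mulr_suml.
  rewrite -mulr_suml; congr (_ * _).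
  rewrite (_ : \sum_(j <- iota 0 N) \sum_(k <- iota 0 N) (j == k)%:R
             = \sum_(j <- iota 0 N) \sum_(k <- iota 0 N) (j == (k + 0)%N)%:R :> R).
    by rewrite sum_eq_shift2 // subn0.
  by apply: eq_bigr => j _; apply: eq_bigr => k _; rewrite addn0.
under eq_bigr => j _ do rewrite exchange_big /=.
rewrite exchange_big /=.
apply: eq_big_nat => d /andP[hd1 hd2].
under eq_bigr => j _ do rewrite big_split /=.
rewrite big_split /=.
under eq_bigr => j _ do rewrite -mulr_suml.
under [X in _ + X]eq_bigr => j _ do rewrite -mulr_suml.
rewrite -!mulr_suml sum_eq_shift ?sum_eq_shift2; [|lia|lia].
by rewrite mulrDr.
Qed.

Lemma occE M m T (B : M.-tuple bool) : (1 <= m)%N ->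
  occ m T B = count (fun j => Wn m T j B) (iota 0 (M - m + 1)).
Proof.
move=> hm; rewrite /occ.
have -> : iota 1 (M - m + 1) = map (addn 1) (iota 0 (M - m + 1)) by rewrite -iotaDl.
rewrite count_map; apply: eq_count => j /=.
rewrite /substr /Wn (_ : ((1 + j + m - 1).+1 - (1 + j))%N = m); last by lia.
by rewrite add1n.
Qed.

Lemma S1 (R : numFieldType) M m T j : size T = m -> (j + m <= M)%N ->
  \sum_(B : M.-tuple bool) (Wn m T j B)%:R = 2 ^+ M / 2 ^+ m :> R.
Proof.
move=> hT hj.
transitivity (\sum_(B : M.-tuple bool) ((Wn m T j B && Wn m T j B) : nat)%:R : R).
  by apply: eq_bigr => B _; rewrite andbb.
rewrite count_pair //.
rewrite (_ : all _ _ = true); last by apply/allP => i _; rewrite eqxx implybT.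
rewrite minnn maxnn (_ : (M - (m + m - (j + m - j)) = M - m)%N); last by lia.
rewrite (_ : 2 ^+ M = 2 ^+ (M - m) * 2 ^+ m :> R); last by rewrite -exprD subnK //; lia.
by rewrite mul1r mulfK // two_neq0.
Qed.

Lemma sum_one (R : comPzSemiRingType) M : \sum_(B : M.-tuple bool) (1 : R) = 2 ^+ M.
Proof.
transitivity (\sum_(B : M.-tuple bool) \prod_(0 <= i < M) (fun (_ : nat) (_ : bool) => 1 : R) i (nth false B i)).
  by apply: eq_bigr => B _; rewrite big1.
rewrite (@sum_tuple_prod R M (fun _ _ => 1)) /= (eq_bigr (fun _ => 2)) ?prodr_const_nat ?subn0 // => i _.
by rewrite sumr_const card_bool.
Qed.

Lemma sum_const_iota (R : pzSemiRingType) N (c : R) : \sum_(j <- iota 0 N) c = N%:R * c.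
Proof.
have -> : \sum_(j <- iota 0 N) c = \sum_(0 <= j < N) c by rewrite /index_iota subn0.
by rewrite sumr_const_nat subn0 mulr_natl.
Qed.

Lemma ecoef_pos m T1 T2 k : (1 <= k < m)%N ->
  ecoef m T1 T2 (Posz k) = epos m T1 T2 k.
Proof.
move=> hk; rewrite /ecoef /epos /substr.
rewrite (_ : (1 <= k <= m.-1)%N = true); last by lia.
by rewrite /= drop0 !subSS subn0.
Qed.

Lemma ecoef_neg m T1 T2 k : (1 <= k < m)%N ->
  ecoef m T1 T2 (- Posz k) = eneg m T1 T2 k.
Proof.
case: k => [|k] hk; first by lia.
have -> : (- Posz k.+1)%R = Negz k by [].
rewrite /ecoef /eneg /substr.
rewrite (_ : (k.+1 <= m.-1)%N = true); last by lia.
rewrite /= drop0 (_ : ((m - k.+1).+1 - 1 = m - k.+1)%N); last by lia.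
by rewrite (_ : (m.+1 - k.+2 = m - k.+1)%N); last by lia.
Qed.

Lemma pow_ge m : (2 * m <= 2 ^ m)%N.
Proof. case: m => [|m] //; rewrite expnS; have := @ltn_expl 2 m isT; lia. Qed.

Theorem mainTheorem1 (R : rcfType) (m : nat) (T1 T2 : bitseq) :
  (2 <= m)%N -> size T1 = m -> size T2 = m -> T1 != T2 ->
  non_self_overlapping m T1 -> non_self_overlapping m T2 ->
  exists (C : R) (M0 : nat), forall M : nat, (m <= M)%N -> (M0 <= M)%N ->
    let mu : R := muNTM R M m in
    let sigma : R := Num.sqrt (sigma2NTM R M m) in
    `| unifE (fun B : M.-tuple bool =>
           ((occ m T1 B)%:R - mu) / sigma * (((occ m T2 B)%:R - mu) / sigma))
       - ((- (2 * m)%:R + 1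
           + \sum_(1 <= k < m)
               (2 ^+ (m - k) * ((ecoef m T1 T2 (Posz k))%:R
                                + (ecoef m T1 T2 (- Posz k))%:R)))
          / (2 ^+ m - (2 * m)%:R + 1)) |
    <= C / M%:R.
Proof.
move=> hm h1 h2 hne _ _.
have PZ : (2 : R) ^+ m != 0 by exact: two_neq0.
pose A : R := a0 R m + \sum_(1 <= d < m) (uu R m T1 T2 d + vv R m T1 T2 d).
pose Bc : R := \sum_(1 <= d < m) d%:R * (uu R m T1 T2 d + vv R m T1 T2 d).
pose s : R := 1 / 2 ^+ m - (2 * m - 1)%:R / 2 ^+ (2 * m).
pose K : R := (1 - m%:R) * A - Bc.
have Dpos : 0 < (2 : R) ^+ m - (2 * m)%:R + 1.
  have : ((2 * m)%:R <= (2 ^ m)%:R :> R) by rewrite ler_nat pow_ge.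
  rewrite natrX; lra.
have e2 : (2 : R) ^+ (2 * m) = (2 ^+ m) ^+ 2 by rewrite -exprM mulnC.
have sE : s = (2 ^+ m - (2 * m)%:R + 1) / (2 ^+ m) ^+ 2.
  rewrite /s e2 natrB; last by lia.
  by field.
have spos : 0 < s by rewrite sE divr_gt0 // exprn_gt0 // exprn_gt0 // ltr0n.
set X := \sum_(1 <= k < m) _.
have XE : X = \sum_(1 <= d < m) (((epos m T1 T2 d)%:R + (eneg m T1 T2 d)%:R) * 2 ^+ (m - d)).
  apply: eq_big_nat => d hd; rewrite ecoef_pos // ecoef_neg // mulrC //.
have LE : (- (2 * m)%:R + 1 + X) / (2 ^+ m - (2 * m)%:R + 1) = A / s.
  have UV : forall d, uu R m T1 T2 d + vv R m T1 T2 d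
      = (((epos m T1 T2 d)%:R + (eneg m T1 T2 d)%:R) * 2 ^+ (m - d) - 2) / (2 ^+ m) ^+ 2.
    by move=> d; rewrite /uu /vv; field.
  have SA : \sum_(1 <= d < m) (uu R m T1 T2 d + vv R m T1 T2 d) = (X - 2 * (m%:R - 1)) / (2 ^+ m) ^+ 2.
    rewrite (eq_bigr _ (fun d _ => UV d)) -mulr_suml sumrB -XE sumr_const_nat.
    congr ((X - _) / _).
    have -> : (m%:R - 1 : R) = (m - 1)%:R by rewrite natrB //; lia.
    by rewrite mulr_natr.
  rewrite /A SA sE /a0 natrM.
  by field; rewrite PZ -natrM (gt_eqF Dpos).
exists (`|K| / s), (2 * m)%N.
move=> M hM hM0; cbv zeta.
set mu := muNTM R M m.
set sigma := Num.sqrt (sigma2NTM R M m).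
set N := (M - m + 1)%N.
have hNm : (m <= N)%N by rewrite /N; lia.
have hMpos : (0 < M)%N by lia.
have cE : forall T (B : M.-tuple bool), (occ m T B)%:R = \sum_(j <- iota 0 N) (Wn m T j B)%:R :> R.
  by move=> T B; rewrite occE ?count_natr //; lia.
have sig2 : sigma ^+ 2 = M%:R * s.
  rewrite /sigma sqr_sqrtr //; exact: mulr_ge0 (ler0n _ _) (ltW spos).
have NE : N%:R = M%:R - m%:R + 1 :> R by rewrite /N natrD natrB.
have muE : mu = N%:R / 2 ^+ m by [].
have Sc : forall T, size T = m -> \sum_(B : M.-tuple bool) (occ m T B)%:R = 2 ^+ M * mu.
  move=> T hT; under eq_bigr => B _ do rewrite cE.
  rewrite exchange_big /= (eq_big_seq (fun _ => 2 ^+ M / 2 ^+ m)); last first.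
    move=> j; rewrite mem_iota => /andP[_ hj]; apply: S1 => //; rewrite /N in hj; lia.
  by rewrite sum_const_iota muE mulrCA.
have HE : \sum_(j <- iota 0 N) \sum_(k <- iota 0 N) hh R m T1 T2 j k = N%:R * A - Bc.
  rewrite H_sum // /A /Bc mulrDr -addrA; congr (_ + _).
  rewrite mulr_sumr -sumrB; apply: eq_big_nat => d /andP[_ hd].
  by rewrite natrB ?mulrBl //; lia.
have Scc : \sum_(B : M.-tuple bool) (occ m T1 B)%:R * (occ m T2 B)%:R
    = 2 ^+ M * (N%:R * (N%:R * (1 / (2 ^+ m) ^+ 2)) + \sum_(j <- iota 0 N) \sum_(k <- iota 0 N) hh R m T1 T2 j k).
  under eq_bigr => B _ do rewrite !cE mulr_suml.
  under eq_bigr => B _ do under eq_bigr => j _ do rewrite mulr_sumr.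
  under eq_bigr => B _ do under eq_bigr => j _ do under eq_bigr => k _ do rewrite -natrM mulnb.
  rewrite exchange_big /=.
  under eq_bigr => j _ do rewrite exchange_big /=.
  rewrite (eq_big_seq (fun j => \sum_(k <- iota 0 N) 2 ^+ M * (1 / (2 ^+ m) ^+ 2 + hh R m T1 T2 j k))); last first.
    move=> j; rewrite mem_iota => /andP[_ hj]; apply: eq_big_seq => k; rewrite mem_iota => /andP[_ hk].
    apply: Sjk => //; rewrite /N in hj hk; lia.
  under eq_bigr => j _ do rewrite -mulr_sumr big_split /= sum_const_iota.
  by rewrite -mulr_sumr big_split /= sum_const_iota.
have SumE : \sum_(B : M.-tuple bool) ((occ m T1 B)%:R - mu) * ((occ m T2 B)%:R - mu) = 2 ^+ M * (N%:R * A - Bc).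
  rewrite (eq_bigr (fun B => (occ m T1 B)%:R * (occ m T2 B)%:R - mu * (occ m T1 B)%:R - mu * (occ m T2 B)%:R + mu ^+ 2 * 1)); last by move=> B _; ring.
  rewrite big_split /= !sumrB -!mulr_sumr Scc !Sc // sum_one -HE muE.
  by field.
rewrite /unifE.
have fE : \sum_(B : M.-tuple bool) (((occ m T1 B)%:R - mu) / sigma * (((occ m T2 B)%:R - mu) / sigma))
    = (\sum_(B : M.-tuple bool) ((occ m T1 B)%:R - mu) * ((occ m T2 B)%:R - mu)) / sigma ^+ 2.
  by rewrite mulr_suml; apply: eq_bigr => B _; rewrite mulrACA -invfM -expr2.
rewrite fE SumE sig2 LE.
have MZ : (M%:R : R) != 0 by rewrite pnatr_eq0 -lt0n.
have -> : 2 ^+ M * (N%:R * A - Bc) / (M%:R * s) / 2 ^+ M - A / s = K / (M%:R * s).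
  by rewrite NE /K; field; rewrite two_neq0 MZ (gt_eqF spos).
have -> : `|K / (M%:R * s)| = `|K| / s / M%:R.
  rewrite normrM normfV (ger0_norm (x := M%:R * s)); last exact: mulr_ge0 (ler0n _ _) (ltW spos).
  by rewrite invfM mulrA mulrAC.
by [].
Qed.
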